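(* Let $n\ge2$ and let $S_N.o\cong S_N$ be the Lie hypersurface of $G_2^\ast(\mathbb{R}^{n+3})$ described below, with its induced Riemannian metric. Then this metric is a nontrivial (non-Einstein) solvsoliton; in particular it is a nongradient expanding Ricci soliton.
   Context: Identify $G_2^\ast(\mathbb{R}^{n+3})=\mathrm{SO}_0(2,n+1)/(\mathrm{SO}(2)\times\mathrm{SO}(n+1))$, with invariant metric normalized to minimal sectional curvature $-8$, with the simply-connected Lie group $S$ whose Lie algebra $\mathfrak{s}$ has orthonormal basis $A_1,A_2,X_0,Y_1,\dots,Y_{n-1},Z_1,\dots,Z_{n-1},W_0$ and nonzero brackets (with $c=2\sqrt2$) $[A_1,X_0]=cX_0$, $[A_1,Y_i]=-(c/2)Y_i$, $[A_1,Z_i]=(c/2)Z_i$, $[A_2,Y_i]=(c/2)Y_i$, $[A_2,Z_i]=(c/2)Z_i$, $[A_2,W_0]=cW_0$, $[X_0,Y_i]=cZ_i$, $[Y_i,Z_i]=cW_0$, with the left-invariant metric making the basis orthonormal. Let $N=\frac1{\sqrt2}(-A_1-A_2)$, $\mathfrak{s}_N=\mathfrak{s}\ominus\mathbb{R}N$, $S_N$ the connected subgroup with Lie algebra $\mathfrak{s}_N$, and $S_N.o$ its orbit through the identity. A metric Lie algebra is an algebraic Ricci soliton with constant $c$ if $\mathrm{Ric}=cI+D$ for a derivation $D$; a solvsoliton is one on a solvable Lie algebra; nontrivial means not Einstein. A Ricci soliton metric satisfies $\mathrm{Ric}_g=cg+\mathcal{L}_Xg$; expanding means $c<0$; gradient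 means $X$ can be chosen as a gradient field. *)

(* Defs.v *)
From Stdlib Require Import Reals Lra.
Open Scope R_scope.

(** Vectors of R^m are represented as functions nat -> R (only the
    coordinates < m are meaningful; our constructions keep the others 0). *)
Definition vec := nat -> R.

Fixpoint rsum (k : nat) (g : nat -> R) : R :=
  match k with O => 0 | S k' => rsum k' g + g k' end.

Definition vzero : vec := fun _ => 0.
Definition vadd (x y : vec) : vec := fun i => x i + y i.
Definition vscal (a : R) (x : vec) : vec := fun i => a * x i.
Definition vsum (k : nat) (g : nat -> vec) : vec := fun i => rsum k (fun l => g l i).
Definition unitv (k : nat) : vec := fun i => if Nat.eqb i k then 1 else 0.
Definition veq (x y : vec) : Prop := forall i, x i = y i.

Definition ip (m : nat) (x y : vec) : R := rsum m (fun i => x i * y i).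

(** ------------------------------------------------------------------
    The solvable Lie algebra s of G_2^*(R^{n+3}), dimension m = 2n+2.
    Index layout of the orthonormal basis:
      0 = A1, 1 = A2, 2 = X0,
      2+j   = Y_j   (1 <= j <= n-1),  i.e. indices 3 .. n+1
      n+1+j = Z_j   (1 <= j <= n-1),  i.e. indices n+2 .. 2n
      2n+1  = W0.
    c = 2 sqrt 2.                                                        *)
Definition cc : R := 2 * sqrt 2.
Definition sdim (n : nat) : nat := 2 * n + 2.

Definition isY (n j : nat) : bool := Nat.leb 3 j && Nat.leb j (n + 1).
Definition isZ (n j : nat) : bool := Nat.leb (n + 2) j && Nat.leb j (2 * n).

Definition br_lt (n i j : nat) : vec :=
  if Nat.eqb i 0 then
    (if Nat.eqb j 2 then vscal cc (unitv 2)
     else if isY n j then vscal (- (cc / 2)) (unitv j)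
     else if isZ n j then vscal (cc / 2) (unitv j)
     else vzero)
  else if Nat.eqb i 1 then
    (if isY n j then vscal (cc / 2) (unitv j)
     else if isZ n j then vscal (cc / 2) (unitv j)
     else if Nat.eqb j (2 * n + 1) then vscal cc (unitv j)
     else vzero)
  else if Nat.eqb i 2 then
    (if isY n j then vscal cc (unitv (j + (n - 1))) else vzero)
  else if isY n i then
    (if Nat.eqb j (i + (n - 1)) then vscal cc (unitv (2 * n + 1)) else vzero)
  else vzero.

Definition br_basis (n i j : nat) : vec :=
  if Nat.ltb i j then br_lt n i j
  else if Nat.ltb j i then vscal (-1) (br_lt n j i)
  else vzero.

Definition sbr (n : nat) (x y : vec) : vec :=
  vsum (sdim n) (fun i => vsum (sdim n) (fun j => vscal (x i * y j) (br_basis n i j))).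

Definition Nvec : vec :=
  fun i => if Nat.eqb i 0 then - (1 / sqrt 2)
           else if Nat.eqb i 1 then - (1 / sqrt 2) else 0.

(** f_0 .. f_{2n} is an orthonormal basis of s_N = s ⊖ R N
    (vectors of R^{2n+2}, orthonormal, orthogonal to N; 2n+1 of them,
    hence spanning the orthogonal complement of N). *)
Definition ONB_sN (n : nat) (f : nat -> vec) : Prop :=
  (forall l i, (l < 2 * n + 1)%nat -> (sdim n <= i)%nat -> f l i = 0) /\
  (forall a b, (a < 2 * n + 1)%nat -> (b < 2 * n + 1)%nat ->
       ip (sdim n) (f a) (f b) = if Nat.eqb a b then 1 else 0) /\
  (forall l, (l < 2 * n + 1)%nat -> ip (sdim n) (f l) Nvec = 0).

(** ------------------------------------------------------------------
    Generic notions for a metric Lie algebra (V, br, <,>) where V is the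
    span of an orthonormal family f_0..f_{k-1} in (vec, ip) and br is a
    bracket with [V,V] ⊆ V.  Its Riemannian geometry is that of the
    corresponding left-invariant metric on the simply connected Lie group. *)
Section MetricLie.
Variable (br : vec -> vec -> vec) (ipr : vec -> vec -> R) (f : nat -> vec) (k : nat).

Definition inV (x : vec) : Prop :=
  exists a : nat -> R, veq x (vsum k (fun l => vscal (a l) (f l))).

(** Levi-Civita connection on left-invariant fields (Koszul formula):
    2<nabla_X Y, Z> = <[X,Y],Z> - <[Y,Z],X> + <[Z,X],Y>. *)
Definition lc (X Y : vec) : vec :=
  vsum k (fun l => vscal ((1/2) * (ipr (br X Y) (f l) - ipr (br Y (f l)) X
                                   + ipr (br (f l) X) Y)) (f l)).

Definition curv (X Y Z : vec) : vec :=
  vadd (vadd (lc X (lc Y Z)) (vscal (-1) (lc Y (lc X Z)))) (vscal (-1) (lc (br X Y) Z)).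

Definition ric (X Y : vec) : R := rsum k (fun l => ipr (curv (f l) X Y) (f l)).

Definition ric_op (X : vec) : vec := vsum k (fun l => vscal (ric X (f l)) (f l)).

Definition is_derivation (D : vec -> vec) : Prop :=
  (forall x, inV x -> inV (D x)) /\
  (forall a b x y, inV x -> inV y -> veq (D (vadd (vscal a x) (vscal b y)))
                                      (vadd (vscal a (D x)) (vscal b (D y)))) /\
  (forall x y, inV x -> inV y ->
      veq (D (br x y)) (vadd (br (D x) y) (br x (D y)))).

Definition alg_ricci_soliton (c : R) : Prop :=
  exists D : vec -> vec, is_derivation D /\
     forall x, inV x -> veq (ric_op x) (vadd (vscal c x) (D x)).

Definition einstein : Prop :=
  exists c : R, forall x, inV x -> veq (ric_op x) (vscal c x).

Inductive derived (P : vec -> Prop) : vec -> Prop :=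
| der_br : forall x y, P x -> P y -> derived P (br x y)
| der_zero : derived P vzero
| der_add : forall x y, derived P x -> derived P y -> derived P (vadd x y)
| der_scal : forall a x, derived P x -> derived P (vscal a x)
| der_ext : forall x y, veq x y -> derived P x -> derived P y.

Fixpoint derser (j : nat) : vec -> Prop :=
  match j with O => inV | S j' => derived (derser j') end.

Definition solvable : Prop :=
  exists j, forall x, derser j x -> veq x vzero.

Definition nontrivial_solvsoliton_with_const (c : R) : Prop :=
  solvable /\ alg_ricci_soliton c /\ ~ einstein.

End MetricLie.

(* Main.v *)
Require Import Defs.
From Stdlib Require Import Reals.
From Stdlib Require Import Lra Lia FunctionalExtensionality Bool Arith.
From mathcomp Require all_boot all_algebra.
From mathcomp Require Rstruct.
Open Scope R_scope.

Lemma rsum_ext k g h : (forall i, (i<k)%nat -> g i = h i) -> rsum k g = rsum k h.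
Proof. induction k; intros H; simpl; auto. rewrite IHk by (intros; apply H; lia). rewrite H by lia. reflexivity. Qed.
Lemma rsum_plus k g h : rsum k (fun i => g i + h i) = rsum k g + rsum k h.
Proof. induction k; simpl; [ring|rewrite IHk; ring]. Qed.
Lemma rsum_minus k g h : rsum k (fun i => g i - h i) = rsum k g - rsum k h.
Proof. induction k; simpl; [ring|rewrite IHk; ring]. Qed.
Lemma rsum_scal k a g : rsum k (fun i => a * g i) = a * rsum k g.
Proof. induction k; simpl; [ring|rewrite IHk; ring]. Qed.
Lemma rsum_scal_r k a g : rsum k (fun i => g i * a) = rsum k g * a.
Proof. induction k; simpl; [ring|rewrite IHk; ring]. Qed.
Lemma rsum_zero k : rsum k (fun _ => 0) = 0.
Proof. induction k; simpl; [ring|rewrite IHk; ring]. Qed.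
Lemma rsum_zero' k g : (forall i, (i<k)%nat -> g i = 0) -> rsum k g = 0.
Proof. intros H. rewrite (rsum_ext k g (fun _ => 0)) by auto. apply rsum_zero. Qed.
Lemma rsum_const k a : rsum k (fun _ => a) = INR k * a.
Proof. induction k; simpl rsum; [simpl; ring|rewrite IHk, S_INR; ring]. Qed.
Lemma rsum_split p q g : rsum (p+q) g = rsum p g + rsum q (fun i => g (p+i)%nat).
Proof. induction q; simpl. rewrite Nat.add_0_r; ring. rewrite Nat.add_succ_r. simpl. rewrite IHq. ring. Qed.
Lemma rsum_swap p q g : rsum p (fun i => rsum q (fun j => g i j)) = rsum q (fun j => rsum p (fun i => g i j)).
Proof. induction p; simpl. rewrite rsum_zero; auto. rewrite IHp, <- rsum_plus. reflexivity. Qed.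
Lemma rsum_delta k p g : rsum k (fun i => unitv p i * g i) = if Nat.ltb p k then g p else 0.
Proof.
induction k; simpl. reflexivity. rewrite IHk. unfold unitv.
destruct (Nat.ltb_spec p k), (Nat.ltb_spec p (S k)), (Nat.eqb_spec k p); try lia; subst; ring.
Qed.
Lemma rsum_delta_r k p g : rsum k (fun i => g i * unitv p i) = if Nat.ltb p k then g p else 0.
Proof. rewrite <- rsum_delta. apply rsum_ext; intros; ring. Qed.

Module Compl.
Import all_boot all_algebra Rstruct.
Import GRing.Theory.
Local Open Scope ring_scope.

Lemma rsum_big k g : rsum k g = (\sum_(i < k) g i)%R.
Proof.
elim: k => [|k IH] /=; first by rewrite big_ord0.
by rewrite big_ord_recr /= IH.
Qed.

Lemma cols_orth (S : nat) (F : nat -> nat -> R) :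
  (forall a b, (a < S)%coq_nat -> (b < S)%coq_nat -> rsum S (fun i => Rmult (F a i) (F b i)) = if Nat.eqb a b then R1 else R0) ->
  forall i j, (i < S)%coq_nat -> (j < S)%coq_nat -> rsum S (fun a => Rmult (F a i) (F a j)) = if Nat.eqb i j then R1 else R0.
Proof.
move=> H i j hi hj.
pose M : 'M[R]_S := \matrix_(a < S, b < S) F a b.
have HM : (M *m M^T = 1%:M)%R.
  apply/matrixP => a b; rewrite !mxE.
  have := H a b (ltP (ltn_ord a)) (ltP (ltn_ord b)).
  rewrite rsum_big => E.
  transitivity (if Nat.eqb a b then R1 else R0).
    by rewrite -E; apply: eq_bigr => k _; rewrite !mxE.
  case: (Nat.eqb_spec a b) => e.
    have -> : a = b by apply/val_inj. by rewrite eqxx.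
  by have /negPf -> : a != b by apply/eqP => ee; apply: e; rewrite ee.
have HM2 := mulmx1C HM.
have := congr1 (fun A : 'M[R]_S => A (Ordinal (introT ltP hi)) (Ordinal (introT ltP hj))) HM2.
rewrite /= !mxE rsum_big => E.
transitivity (\sum_(k < S) M^T (Ordinal (introT ltP hi)) k * M k (Ordinal (introT ltP hj))).
  by apply: eq_bigr => k _; rewrite !mxE.
rewrite E.
case: (Nat.eqb_spec i j) => e.
  subst j. have -> : Ordinal (introT ltP hi) = Ordinal (introT ltP hj) by apply/val_inj. by rewrite eqxx.
by have /negPf -> : Ordinal (introT ltP hi) != Ordinal (introT ltP hj) by apply/eqP => [[ee]]; apply: e.
Qed.
End Compl.

Record rv := mkrv { rh : R; rx : R; ry : nat -> R; rz : nat -> R; rw : R }.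

Lemma rv_eq a b : rh a = rh b -> rx a = rx b -> (forall i, ry a i = ry b i) ->
  (forall i, rz a i = rz b i) -> rw a = rw b -> a = b.
Proof.
destruct a, b; simpl; intros; f_equal; auto; apply functional_extensionality; auto.
Qed.

Definition rzero := mkrv 0 0 (fun _ => 0) (fun _ => 0) 0.
Definition radd a b := mkrv (rh a + rh b) (rx a + rx b) (fun i => ry a i + ry b i)
   (fun i => rz a i + rz b i) (rw a + rw b).
Definition rscal t a := mkrv (t * rh a) (t * rx a) (fun i => t * ry a i) (fun i => t * rz a i) (t * rw a).
Definition rvsum k (g : nat -> rv) := mkrv (rsum k (fun l => rh (g l))) (rsum k (fun l => rx (g l)))
  (fun i => rsum k (fun l => ry (g l) i)) (fun i => rsum k (fun l => rz (g l) i)) (rsum k (fun l => rw (g l))).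

Definition s2 := sqrt 2.
Lemma s2_sq : s2 * s2 = 2.
Proof. unfold s2. apply sqrt_sqrt. lra. Qed.
Lemma s2_pos : 0 < s2.
Proof. unfold s2. apply sqrt_lt_R0. lra. Qed.

Section Rec.
Variable m : nat.

Definition dot (f g : nat -> R) := rsum m (fun i => f i * g i).
Definition ipr a b := rh a * rh b + rx a * rx b + dot (ry a) (ry b) + dot (rz a) (rz b) + rw a * rw b.

Definition brc u v := mkrv 0 (2 * (rh u * rx v - rh v * rx u))
  (fun j => -2 * (rh u * ry v j - rh v * ry u j))
  (fun j => 2 * s2 * (rx u * ry v j - rx v * ry u j))
  (-2 * (rh u * rw v - rh v * rw u) + 2 * s2 * (dot (ry u) (rz v) - dot (ry v) (rz u))).

Definition nab u v := mkrv (2 * rx u * rx v - 2 * dot (ry u) (ry v) - 2 * rw u * rw v)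
  (-2 * rh v * rx u + s2 * (dot (rz u) (ry v) + dot (rz v) (ry u)))
  (fun j => 2 * rh v * ry u j - s2 * (rx v * rz u j + rx u * rz v j) + s2 * (rw u * rz v j + rw v * rz u j))
  (fun j => s2 * (rx u * ry v j - rx v * ry u j - rw u * ry v j - rw v * ry u j))
  (2 * rh v * rw u + s2 * (dot (ry u) (rz v) - dot (ry v) (rz u))).

Definition curvr t u v := radd (radd (nab t (nab u v)) (rscal (-1) (nab u (nab t v)))) (rscal (-1) (nab (brc t u) v)).

Lemma dot_add_l f g h : dot (fun i => f i + g i) h = dot f h + dot g h.
Proof. unfold dot. rewrite <- rsum_plus. apply rsum_ext; intros; ring. Qed.
Lemma dot_add_r f g h : dot h (fun i => f i + g i) = dot h f + dot h g.
Proof. unfold dot. rewrite <- rsum_plus. apply rsum_ext; intros; ring. Qed.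
Lemma dot_scal_l t f h : dot (fun i => t * f i) h = t * dot f h.
Proof. unfold dot. rewrite <- rsum_scal. apply rsum_ext; intros; ring. Qed.
Lemma dot_scal_r t f h : dot h (fun i => t * f i) = t * dot h f.
Proof. unfold dot. rewrite <- rsum_scal. apply rsum_ext; intros; ring. Qed.
Lemma dot_zero_l h : dot (fun _ => 0) h = 0.
Proof. unfold dot. apply rsum_zero'; intros; ring. Qed.
Lemma dot_zero_r h : dot h (fun _ => 0) = 0.
Proof. unfold dot. apply rsum_zero'; intros; ring. Qed.
Lemma dot_comm f g : dot f g = dot g f.
Proof. unfold dot. apply rsum_ext; intros; ring. Qed.
Lemma dot_delta_l i f : (i < m)%nat -> dot (unitv i) f = f i.
Proof. intros. unfold dot. rewrite rsum_delta. destruct (Nat.ltb_spec i m); [auto|lia]. Qed.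
Lemma dot_delta_r i f : (i < m)%nat -> dot f (unitv i) = f i.
Proof. intros. unfold dot. rewrite rsum_delta_r. destruct (Nat.ltb_spec i m); [auto|lia]. Qed.

Ltac dnorm := repeat (rewrite ?dot_add_l, ?dot_add_r, ?dot_scal_l, ?dot_scal_r, ?dot_zero_l, ?dot_zero_r).

Lemma nab_add_l p q v : nab (radd p q) v = radd (nab p v) (nab q v).
Proof. apply rv_eq; simpl; intros; dnorm; ring. Qed.
Lemma nab_scal_l t p v : nab (rscal t p) v = rscal t (nab p v).
Proof. apply rv_eq; simpl; intros; dnorm; ring. Qed.
Lemma nab_add_r p q v : nab v (radd p q) = radd (nab v p) (nab v q).
Proof. apply rv_eq; simpl; intros; dnorm; ring. Qed.
Lemma nab_scal_r t p v : nab v (rscal t p) = rscal t (nab v p).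
Proof. apply rv_eq; simpl; intros; dnorm; ring. Qed.
Lemma brc_add_l p q v : brc (radd p q) v = radd (brc p v) (brc q v).
Proof. apply rv_eq; simpl; intros; dnorm; ring. Qed.
Lemma brc_scal_l t p v : brc (rscal t p) v = rscal t (brc p v).
Proof. apply rv_eq; simpl; intros; dnorm; ring. Qed.
Lemma curvr_add t1 t2 u v : curvr (radd t1 t2) u v = radd (curvr t1 u v) (curvr t2 u v).
Proof.
unfold curvr. rewrite nab_add_l, nab_add_l, brc_add_l, nab_add_l, nab_add_r.
apply rv_eq; simpl; intros; ring.
Qed.
Lemma curvr_scal t p u v : curvr (rscal t p) u v = rscal t (curvr p u v).
Proof.
unfold curvr. rewrite nab_scal_l, nab_scal_l, brc_scal_l, nab_scal_l, nab_scal_r.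
apply rv_eq; simpl; intros; ring.
Qed.

Lemma ipr_add_l p q r : ipr (radd p q) r = ipr p r + ipr q r.
Proof. unfold ipr; simpl; dnorm; ring. Qed.
Lemma ipr_scal_l t p r : ipr (rscal t p) r = t * ipr p r.
Proof. unfold ipr; simpl; dnorm; ring. Qed.
Lemma ipr_comm p q : ipr p q = ipr q p.
Proof. unfold ipr; rewrite (dot_comm (ry p)), (dot_comm (rz p)); ring. Qed.

End Rec.

Section RecC.
Variable m : nat.
Definition z0 : nat -> R := fun _ => 0.
Definition bH := mkrv 1 0 z0 z0 0.
Definition bX := mkrv 0 1 z0 z0 0.
Definition bY i := mkrv 0 0 (unitv i) z0 0.
Definition bZ i := mkrv 0 0 z0 (unitv i) 0.
Definition bW := mkrv 0 0 z0 z0 1.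
Definition bb k := if Nat.eqb k 0 then bH else if Nat.eqb k 1 then bX
  else if Nat.ltb k (m+2) then bY (k-2) else if Nat.ltb k (2*m+2) then bZ (k-(m+2)) else bW.
Definition clean d := forall i, (m <= i)%nat -> ry d i = 0 /\ rz d i = 0.

Lemma bb0 : bb 0 = bH. Proof. reflexivity. Qed.
Lemma bb1 : bb 1 = bX. Proof. reflexivity. Qed.
Lemma bbY i : (i < m)%nat -> bb (2+i) = bY i.
Proof. intros; unfold bb. destruct (Nat.eqb_spec (2+i) 0), (Nat.eqb_spec (2+i) 1), (Nat.ltb_spec (2+i) (m+2)); try lia.
 f_equal; lia. Qed.
Lemma bbZ i : (i < m)%nat -> bb (2+m+i) = bZ i.
Proof. intros; unfold bb. destruct (Nat.eqb_spec (2+m+i) 0), (Nat.eqb_spec (2+m+i) 1), (Nat.ltb_spec (2+m+i) (m+2)),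
  (Nat.ltb_spec (2+m+i) (2*m+2)); try lia. f_equal; lia. Qed.
Lemma bbW : bb (2+m+m) = bW.
Proof. unfold bb. destruct (Nat.eqb_spec (2+m+m) 0), (Nat.eqb_spec (2+m+m) 1), (Nat.ltb_spec (2+m+m) (m+2)),
  (Nat.ltb_spec (2+m+m) (2*m+2)); try lia; auto. Qed.

Lemma rsum_blocks g : rsum (2*m+3) g = g 0%nat + g 1%nat + rsum m (fun i => g (2+i)%nat)
   + rsum m (fun i => g (2+m+i)%nat) + g (2+m+m)%nat.
Proof.
replace (2*m+3)%nat with (S ((2 + m) + m))%nat by lia.
change (rsum (S (2+m+m)) g) with (rsum (2+m+m) g + g (2+m+m)%nat).
rewrite (rsum_split (2+m) m), (rsum_split 2 m). simpl. ring.
Qed.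

Ltac dnorm := repeat (rewrite ?dot_add_l, ?dot_add_r, ?dot_scal_l, ?dot_scal_r, ?dot_zero_l, ?dot_zero_r).

Lemma ipr_bH d : ipr m d bH = rh d.
Proof. unfold ipr; simpl; unfold z0; dnorm; ring. Qed.
Lemma ipr_bX d : ipr m d bX = rx d.
Proof. unfold ipr; simpl; unfold z0; dnorm; ring. Qed.
Lemma ipr_bW d : ipr m d bW = rw d.
Proof. unfold ipr; simpl; unfold z0; dnorm; ring. Qed.
Lemma ipr_bY d i : (i < m)%nat -> ipr m d (bY i) = ry d i.
Proof. intros; unfold ipr; simpl; unfold z0; dnorm. rewrite dot_delta_r by auto. ring. Qed.
Lemma ipr_bZ d i : (i < m)%nat -> ipr m d (bZ i) = rz d i.
Proof. intros; unfold ipr; simpl; unfold z0; dnorm. rewrite dot_delta_r by auto. ring. Qed.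

Lemma blocks_ipr (F : rv -> R) :
  rsum (2*m+3) (fun k => F (bb k)) = F bH + F bX + rsum m (fun i => F (bY i)) + rsum m (fun i => F (bZ i)) + F bW.
Proof.
rewrite rsum_blocks, bb0, bb1, bbW.
rewrite (rsum_ext m (fun i => F (bb (2+i)%nat)) (fun i => F (bY i))) by (intros; rewrite bbY; auto).
rewrite (rsum_ext m (fun i => F (bb (2+m+i)%nat)) (fun i => F (bZ i))) by (intros; rewrite bbZ; auto).
reflexivity.
Qed.

Lemma expand d : clean d -> d = rvsum (2*m+3) (fun k => rscal (ipr m d (bb k)) (bb k)).
Proof.
intros Hc. apply rv_eq; cbn [rh rx ry rz rw rscal rvsum]; intros.
- rewrite (blocks_ipr (fun b => ipr m d b * rh b)). simpl.
  rewrite !rsum_zero' by (intros; simpl; ring). rewrite ipr_bH. ring.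
 - rewrite (blocks_ipr (fun b => ipr m d b * rx b)). simpl.
  rewrite !rsum_zero' by (intros; simpl; ring). rewrite ipr_bX. ring.
- rewrite (blocks_ipr (fun b => ipr m d b * ry b i)). simpl. unfold z0.
  rewrite (rsum_zero' m (fun i0 => ipr m d (bZ i0) * 0)) by (intros; ring).
  rewrite (rsum_ext m _ (fun i0 => unitv i i0 * ry d i0)).
  2:{ intros j Hj. rewrite ipr_bY by auto. unfold unitv. destruct (Nat.eqb_spec i j), (Nat.eqb_spec j i); subst; try lia; ring. }
  rewrite rsum_delta. destruct (Nat.ltb_spec i m). ring. destruct (Hc i) as [-> _]; auto. ring.
- rewrite (blocks_ipr (fun b => ipr m d b * rz b i)). simpl. unfold z0.
  rewrite (rsum_zero' m (fun i0 => ipr m d (bY i0) * 0)) by (intros; ring).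
  rewrite (rsum_ext m _ (fun i0 => unitv i i0 * rz d i0)).
  2:{ intros j Hj. rewrite ipr_bZ by auto. unfold unitv. destruct (Nat.eqb_spec i j), (Nat.eqb_spec j i); subst; try lia; ring. }
  rewrite rsum_delta. destruct (Nat.ltb_spec i m). ring. destruct (Hc i) as [_ ->]; auto. ring.
- rewrite (blocks_ipr (fun b => ipr m d b * rw b)). simpl.
  rewrite !rsum_zero' by (intros; simpl; ring). rewrite ipr_bW. ring.
Qed.

Lemma rvsum_S k g : rvsum (S k) g = radd (rvsum k g) (g k).
Proof. reflexivity. Qed.

Lemma curvr_zero u v : curvr m rzero u v = rzero.
Proof.
replace rzero with (rscal 0 rzero) by (apply rv_eq; simpl; intros; ring).
rewrite curvr_scal. apply rv_eq; simpl; intros; ring.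
Qed.

Lemma curvr_rvsum k g u v : curvr m (rvsum k g) u v = rvsum k (fun l => curvr m (g l) u v).
Proof.
induction k. apply curvr_zero.
rewrite !rvsum_S, curvr_add, IHk. reflexivity.
Qed.

Lemma ipr_rvsum k g q : ipr m (rvsum k g) q = rsum k (fun l => ipr m (g l) q).
Proof.
induction k. unfold ipr; simpl; rewrite dot_zero_l, dot_zero_l; ring.
rewrite rvsum_S, ipr_add_l, IHk. reflexivity.
Qed.

Lemma trace_one p u v : clean p ->
  ipr m (curvr m p u v) p = rsum (2*m+3) (fun k => ipr m p (bb k) * ipr m (curvr m (bb k) u v) p).
Proof.
intros Hc.
replace (curvr m p u v) with (curvr m (rvsum (2*m+3) (fun k => rscal (ipr m p (bb k)) (bb k))) u v)
  by (f_equal; symmetry; apply expand; auto).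
rewrite curvr_rvsum, ipr_rvsum. apply rsum_ext; intros. rewrite curvr_scal, ipr_scal_l. reflexivity.
Qed.

Lemma trace_rec (d : nat -> rv) u v :
  (forall l, (l < 2*m+3)%nat -> clean (d l)) ->
  (forall p q, rsum (2*m+3) (fun l => ipr m p (d l) * ipr m (d l) q) = ipr m p q) ->
  rsum (2*m+3) (fun l => ipr m (curvr m (d l) u v) (d l)) = rsum (2*m+3) (fun k => ipr m (curvr m (bb k) u v) (bb k)).
Proof.
intros Hc Hcomp.
rewrite (rsum_ext _ _ (fun l => rsum (2*m+3) (fun k => ipr m (d l) (bb k) * ipr m (curvr m (bb k) u v) (d l))))
  by (intros; apply trace_one; auto).
rewrite rsum_swap. apply rsum_ext; intros k Hk.
rewrite (ipr_comm m (curvr m (bb k) u v) (bb k)).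
rewrite <- (Hcomp (bb k) (curvr m (bb k) u v)).
apply rsum_ext; intros. rewrite (ipr_comm m (d i) (bb k)), (ipr_comm m (d i) (curvr m (bb k) u v)). reflexivity.
Qed.
End RecC.

Section RecD.
Variable m : nat.
Ltac dnorm := repeat (rewrite ?dot_add_l, ?dot_add_r, ?dot_scal_l, ?dot_scal_r, ?dot_zero_l, ?dot_zero_r).
Lemma unitv_same i : unitv i i = 1.
Proof. unfold unitv. rewrite Nat.eqb_refl. reflexivity. Qed.

Lemma nab_H v : nab m bH v = rzero.
Proof. apply rv_eq; simpl; intros; unfold z0; dnorm; ring. Qed.
Lemma nab_X v : nab m bX v = mkrv (2 * rx v) (-2 * rh v) (fun j => - s2 * rz v j) (fun j => s2 * ry v j) 0.
Proof. apply rv_eq; simpl; intros; unfold z0; dnorm; ring. Qed.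
Lemma nab_Y i v : (i < m)%nat -> nab m (bY i) v = mkrv (-2 * ry v i) (s2 * rz v i) (fun j => 2 * rh v * unitv i j)
   (fun j => - s2 * (rx v + rw v) * unitv i j) (s2 * rz v i).
Proof. intros; apply rv_eq; simpl; intros; unfold z0; dnorm; rewrite ?dot_delta_l, ?dot_delta_r by auto; ring. Qed.
Lemma nab_Z i v : (i < m)%nat -> nab m (bZ i) v = mkrv 0 (s2 * ry v i) (fun j => s2 * (rw v - rx v) * unitv i j) z0 (- s2 * ry v i).
Proof. intros; apply rv_eq; simpl; intros; unfold z0; dnorm; rewrite ?dot_delta_l, ?dot_delta_r by auto; ring. Qed.
Lemma nab_W v : nab m bW v = mkrv (-2 * rw v) 0 (fun j => s2 * rz v j) (fun j => - s2 * ry v j) (2 * rh v).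
Proof. apply rv_eq; simpl; intros; unfold z0; dnorm; ring. Qed.
Lemma brc_H v : brc m bH v = mkrv 0 (2 * rx v) (fun j => -2 * ry v j) z0 (-2 * rw v).
Proof. apply rv_eq; simpl; intros; unfold z0; dnorm; ring. Qed.
Lemma brc_X v : brc m bX v = mkrv 0 (-2 * rh v) z0 (fun j => 2 * s2 * ry v j) 0.
Proof. apply rv_eq; simpl; intros; unfold z0; dnorm; ring. Qed.
Lemma brc_Y i v : (i < m)%nat -> brc m (bY i) v = mkrv 0 0 (fun j => 2 * rh v * unitv i j) (fun j => -2 * s2 * rx v * unitv i j) (2 * s2 * rz v i).
Proof. intros; apply rv_eq; simpl; intros; unfold z0; dnorm; rewrite ?dot_delta_l, ?dot_delta_r by auto; ring. Qed.
Lemma brc_Z i v : (i < m)%nat -> brc m (bZ i) v = mkrv 0 0 z0 z0 (-2 * s2 * ry v i).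
Proof. intros; apply rv_eq; simpl; intros; unfold z0; dnorm; rewrite ?dot_delta_l, ?dot_delta_r by auto; ring. Qed.
Lemma brc_W v : brc m bW v = mkrv 0 0 z0 z0 (2 * rh v).
Proof. apply rv_eq; simpl; intros; unfold z0; dnorm; ring. Qed.

Ltac crunch := unfold curvr; cbn [rh rx ry rz rw radd rscal]; unfold nab at 1 2 3 4 5 6;
  cbn [rh rx ry rz rw radd rscal]; unfold z0; dnorm; rewrite ?unitv_same; rewrite ?s2_sq.


Ltac fin := cbn [rh rx ry rz rw radd rscal rzero]; unfold nab; cbn [rh rx ry rz rw rzero]; unfold z0; dnorm; rewrite ?unitv_same; rewrite ?dot_delta_l, ?dot_delta_r by auto.

Lemma s2_pow : s2 ^ 2 = 2.
Proof. rewrite <- s2_sq; ring. Qed.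
Ltac fin2 a b := try rewrite (dot_comm m (ry b) (ry a)); try rewrite (dot_comm m (rz b) (rz a));
   ring_simplify; rewrite ?s2_pow; ring.

Lemma T_H a b : rh (curvr m bH a b) = -4 * rx a * rx b - 4 * rw a * rw b - 4 * dot m (ry a) (ry b).
Proof. unfold curvr. rewrite nab_H, nab_H, brc_H. fin. fin2 a b. Qed.
Lemma T_X a b : rx (curvr m bX a b) = -2 * dot m (ry a) (ry b) + 4 * rw a * rw b + 2 * dot m (rz a) (rz b) - 4 * rh a * rh b.
Proof. unfold curvr. rewrite nab_X, nab_X, brc_X. fin. fin2 a b. Qed.
Lemma T_W a b : rw (curvr m bW a b) = 4 * rx a * rx b - 2 * dot m (ry a) (ry b) + 2 * dot m (rz a) (rz b) - 4 * rh a * rh b.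
Proof. unfold curvr. rewrite nab_W, nab_W, brc_W. fin. fin2 a b. Qed.
Lemma T_Y i a b : (i < m)%nat -> ry (curvr m (bY i) a b) i =
   (-2 * rx a * rx b + 2 * rx a * rw b + 2 * rx b * rw a - 2 * rw a * rw b - 4 * dot m (ry a) (ry b) - 4 * rh a * rh b)
   + 4 * (ry a i * ry b i) - 4 * (rz a i * rz b i).
Proof. intros. unfold curvr. rewrite nab_Y, nab_Y, brc_Y by auto. fin. fin2 a b. Qed.
Lemma T_Z i a b : (i < m)%nat -> rz (curvr m (bZ i) a b) i =
   (- 2 * rx a * rw b + 2 * rx a * rx b + 2 * rw a * rw b - 2 * rx b * rw a) - 4 * (ry a i * ry b i).
Proof. intros. unfold curvr. rewrite nab_Z, nab_Z, brc_Z by auto. fin. fin2 a b. Qed.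

Lemma ric_rec a b : rsum (2*m+3) (fun k => ipr m (curvr m (bb m k) a b) (bb m k)) =
   - (4 * INR m + 8) * (rh a * rh b + dot m (ry a) (ry b)).
Proof.
rewrite (blocks_ipr m (fun e => ipr m (curvr m e a b) e)).
rewrite ipr_bH, ipr_bX, ipr_bW, T_H, T_X, T_W.
rewrite (rsum_ext m _ (fun i => (-2 * rx a * rx b + 2 * rx a * rw b + 2 * rx b * rw a - 2 * rw a * rw b - 4 * dot m (ry a) (ry b) - 4 * rh a * rh b)
   + 4 * (ry a i * ry b i) - 4 * (rz a i * rz b i))) by (intros; rewrite ipr_bY, T_Y by auto; reflexivity).
rewrite (rsum_ext m (fun i => ipr m (curvr m (bZ i) a b) (bZ i)) (fun i => (- 2 * rx a * rw b + 2 * rx a * rx b + 2 * rw a * rw b - 2 * rx b * rw a) - 4 * (ry a i * ry b i)))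
   by (intros; rewrite ipr_bZ, T_Z by auto; reflexivity).
rewrite !rsum_minus, !rsum_plus, !rsum_scal, !rsum_const.
unfold dot. ring.
Qed.
End RecD.

Ltac bdestr := repeat (match goal with
 | |- context [Nat.eqb ?x ?y] => let H := fresh in destruct (Nat.eqb_spec x y) as [H|H]; [try subst x|]
 | |- context [Nat.leb ?x ?y] => destruct (Nat.leb_spec x y)
 | |- context [Nat.ltb ?x ?y] => destruct (Nat.ltb_spec x y)
 end; cbn [andb orb] in *; try (exfalso; lia)).

Lemma rsum_delta_off M p q g : rsum M (fun i => unitv p (q + i)%nat * g i) =
  if andb (q <=? p) (p <? q + M)%nat then g (p - q)%nat else 0.
Proof.
induction M; simpl. bdestr; reflexivity.
rewrite IHM. unfold unitv. bdestr; try ring.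
all: replace (p - q)%nat with M by lia; ring.
Qed.

Section E.
Variable n : nat.
Hypothesis hn : (2 <= n)%nat.

Definition brv (u v : vec) : vec := fun k =>
  if Nat.eqb k 2 then cc * (u 0%nat * v 2%nat - v 0%nat * u 2%nat)
  else if isY n k then - (cc/2) * (u 0%nat * v k - v 0%nat * u k) + (cc/2) * (u 1%nat * v k - v 1%nat * u k)
  else if isZ n k then (cc/2) * (u 0%nat * v k - v 0%nat * u k) + (cc/2) * (u 1%nat * v k - v 1%nat * u k)
        + cc * (u 2%nat * v (k - (n-1))%nat - v 2%nat * u (k - (n-1))%nat)
  else if Nat.eqb k (2*n+1) then cc * (u 1%nat * v k - v 1%nat * u k)
        + cc * rsum (n-1) (fun i => u (3+i)%nat * v (n+2+i)%nat - v (3+i)%nat * u (n+2+i)%nat)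
  else 0.

Lemma brv_anti u v k : brv v u k = - brv u v k.
Proof.
unfold brv. rewrite (rsum_ext _ _ (fun i => -1 * (u (3 + i)%nat * v (n + 2 + i)%nat - v (3 + i)%nat * u (n + 2 + i)%nat)))
  by (intros; ring). rewrite rsum_scal.
destruct (Nat.eqb k 2); [ring|]. destruct (isY n k); [ring|]. destruct (isZ n k); [ring|]. destruct (Nat.eqb k (2*n+1)); ring.
Qed.

Lemma brlt_ok a b k : (a < b)%nat -> br_lt n a b k = brv (unitv a) (unitv b) k.
Proof.
intros Hab. unfold brv. rewrite rsum_minus.
rewrite (rsum_delta_off (n-1) a 3 (fun i => unitv b (n+2+i)%nat)).
rewrite (rsum_delta_off (n-1) b 3 (fun i => unitv a (n+2+i)%nat)).
unfold br_lt, isY, isZ, vscal, vzero, unitv.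
destruct (Nat.lt_exists_pred 1 n) as [m0 [-> _]]; [lia|]. replace (S m0 - 1)%nat with m0 by lia.
bdestr. all: ring.
Qed.

Lemma brv_diag u k : brv u u k = 0.
Proof. pose proof (brv_anti u u k). lra. Qed.

Lemma br_basis_ok a b k : br_basis n a b k = brv (unitv a) (unitv b) k.
Proof.
unfold br_basis. destruct (Nat.ltb_spec a b). apply brlt_ok; auto.
destruct (Nat.ltb_spec b a). unfold vscal. rewrite brlt_ok by auto. rewrite brv_anti. ring.
replace b with a by lia. rewrite brv_diag. reflexivity.
Qed.

Lemma unitv_sym i j : unitv i j = unitv j i.
Proof. unfold unitv. rewrite Nat.eqb_sym. reflexivity. Qed.

Lemma wsum_add u u' v : rsum (n-1) (fun i => vadd u u' (3+i)%nat * v (n+2+i)%nat - v (3+i)%nat * vadd u u' (n+2+i)%nat)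
  = rsum (n-1) (fun i => u (3+i)%nat * v (n+2+i)%nat - v (3+i)%nat * u (n+2+i)%nat)
  + rsum (n-1) (fun i => u' (3+i)%nat * v (n+2+i)%nat - v (3+i)%nat * u' (n+2+i)%nat).
Proof. rewrite <- rsum_plus. apply rsum_ext; intros; unfold vadd; ring. Qed.
Lemma wsum_scal t u v : rsum (n-1) (fun i => vscal t u (3+i)%nat * v (n+2+i)%nat - v (3+i)%nat * vscal t u (n+2+i)%nat)
  = t * rsum (n-1) (fun i => u (3+i)%nat * v (n+2+i)%nat - v (3+i)%nat * u (n+2+i)%nat).
Proof. rewrite <- rsum_scal. apply rsum_ext; intros; unfold vscal; ring. Qed.

Lemma brv_add_l u u' v k : brv (vadd u u') v k = brv u v k + brv u' v k.
Proof.
unfold brv. rewrite wsum_add. unfold vadd.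
destruct (Nat.eqb k 2); [ring|]. destruct (isY n k); [ring|]. destruct (isZ n k); [ring|]. destruct (Nat.eqb k (2*n+1)); ring.
Qed.
Lemma brv_scal_l t u v k : brv (vscal t u) v k = t * brv u v k.
Proof.
unfold brv. rewrite wsum_scal. unfold vscal.
destruct (Nat.eqb k 2); [ring|]. destruct (isY n k); [ring|]. destruct (isZ n k); [ring|]. destruct (Nat.eqb k (2*n+1)); ring.
Qed.
Lemma brv_vsum K g v k : brv (vsum K g) v k = rsum K (fun i => brv (g i) v k).
Proof.
induction K.
- unfold brv, vsum. cbn [rsum]. rewrite rsum_zero' by (intros; ring). repeat match goal with |- context [if ?b then _ else _] => destruct b end; ring.
- change (vsum (S K) g) with (vadd (vsum K g) (g K)). rewrite brv_add_l, IHK. reflexivity.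
Qed.

Lemma brv_local u u' v k : (forall i, (i < sdim n)%nat -> u i = u' i) -> brv u v k = brv u' v k.
Proof.
intros H. unfold sdim in H. unfold brv.
rewrite (rsum_ext (n-1) (fun i => u (3 + i)%nat * v (n + 2 + i)%nat - v (3 + i)%nat * u (n + 2 + i)%nat)
   (fun i => u' (3 + i)%nat * v (n + 2 + i)%nat - v (3 + i)%nat * u' (n + 2 + i)%nat))
   by (intros; rewrite !H by lia; reflexivity).
unfold isY, isZ. bdestr; rewrite ?H by lia; reflexivity.
Qed.

Lemma brv_expand_l u v k : brv u v k = rsum (sdim n) (fun i => u i * brv (unitv i) v k).
Proof.
rewrite (brv_local u (vsum (sdim n) (fun i => vscal (u i) (unitv i)))).
- rewrite brv_vsum. apply rsum_ext; intros. apply brv_scal_l.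
- intros i Hi. unfold vsum, vscal.
  rewrite (rsum_ext _ _ (fun l => unitv i l * u l)) by (intros; rewrite unitv_sym; ring).
  rewrite rsum_delta. destruct (Nat.ltb_spec i (sdim n)); [reflexivity|lia].
Qed.

Lemma brv_expand_r u v k : brv u v k = rsum (sdim n) (fun j => v j * brv u (unitv j) k).
Proof.
rewrite brv_anti, brv_expand_l.
rewrite (rsum_ext (sdim n) (fun j => v j * brv u (unitv j) k) (fun j => -1 * (v j * brv (unitv j) u k)))
  by (intros j _; rewrite (brv_anti (unitv j) u k); ring).
rewrite rsum_scal. ring.
Qed.

Lemma sbr_brv u v k : sbr n u v k = brv u v k.
Proof.
unfold sbr, vsum, vscal. rewrite brv_expand_l. apply rsum_ext; intros i Hi.
rewrite brv_expand_r, <- rsum_scal. apply rsum_ext; intros j Hj. rewrite br_basis_ok. ring.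
Qed.

Lemma sbr_eq u v : sbr n u v = brv u v.
Proof. apply functional_extensionality; intros; apply sbr_brv. Qed.


End E.


Lemma s2_neq : s2 <> 0.
Proof. pose proof s2_pos; lra. Qed.
Lemma cc_s2 : cc = 2 * s2.
Proof. reflexivity. Qed.

Section F.
Variable n : nat.
Hypothesis hn : (2 <= n)%nat.

Definition enc (a : rv) : vec := fun k =>
  if Nat.eqb k 0 then rh a / s2 else if Nat.eqb k 1 then - (rh a / s2) else if Nat.eqb k 2 then rx a
  else if isY n k then ry a (k-3)%nat else if isZ n k then rz a (k-(n+2))%nat
  else if Nat.eqb k (2*n+1) then rw a else 0.

Definition dec (u : vec) : rv := mkrv ((u 0%nat - u 1%nat) / s2) (u 2%nat)
  (fun i => if Nat.ltb i (n-1) then u (3+i)%nat else 0)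
  (fun i => if Nat.ltb i (n-1) then u (n+2+i)%nat else 0) (u (2*n+1)%nat).

Lemma kcase k : k = 0%nat \/ k = 1%nat \/ k = 2%nat \/ (exists i, (i < n-1)%nat /\ k = (3+i)%nat)
  \/ (exists i, (i < n-1)%nat /\ k = (n+2+i)%nat) \/ k = (2*n+1)%nat \/ (2*n+2 <= k)%nat.
Proof.
destruct (le_lt_dec 3 k); [|lia].
destruct (le_lt_dec (n+2) k).
- destruct (le_lt_dec (2*n+1) k). lia. right; right; right; right; left. exists (k - (n+2))%nat. lia.
- right; right; right; left. exists (k-3)%nat. lia.
Qed.

Lemma enc_0 a : enc a 0%nat = rh a / s2. Proof. reflexivity. Qed.
Lemma enc_1 a : enc a 1%nat = - (rh a / s2). Proof. reflexivity. Qed.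
Lemma enc_2 a : enc a 2%nat = rx a. Proof. reflexivity. Qed.
Lemma enc_Y a i : (i < n-1)%nat -> enc a (3+i)%nat = ry a i.
Proof. intros. unfold enc, isY, isZ. bdestr. f_equal. lia. Qed.
Lemma enc_Z a i : (i < n-1)%nat -> enc a (n+2+i)%nat = rz a i.
Proof. intros. unfold enc, isY, isZ. bdestr. f_equal. lia. Qed.
Lemma enc_W a : enc a (2*n+1)%nat = rw a.
Proof. unfold enc, isY, isZ. bdestr. reflexivity. Qed.
Lemma enc_out a k : (2*n+2 <= k)%nat -> enc a k = 0.
Proof. intros. unfold enc, isY, isZ. bdestr. reflexivity. Qed.

Lemma brv_0 u v : brv n u v 0%nat = 0.
Proof. unfold brv, isY, isZ. bdestr. reflexivity. Qed.
Lemma brv_1 u v : brv n u v 1%nat = 0.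
Proof. unfold brv, isY, isZ. bdestr. reflexivity. Qed.
Lemma brv_2 u v : brv n u v 2%nat = cc * (u 0%nat * v 2%nat - v 0%nat * u 2%nat).
Proof. reflexivity. Qed.
Lemma brv_Y u v i : (i < n-1)%nat -> brv n u v (3+i)%nat =
  - (cc/2) * (u 0%nat * v (3+i)%nat - v 0%nat * u (3+i)%nat) + (cc/2) * (u 1%nat * v (3+i)%nat - v 1%nat * u (3+i)%nat).
Proof. intros. unfold brv, isY, isZ. bdestr. reflexivity. Qed.
Lemma brv_Z u v i : (i < n-1)%nat -> brv n u v (n+2+i)%nat =
  (cc/2) * (u 0%nat * v (n+2+i)%nat - v 0%nat * u (n+2+i)%nat) + (cc/2) * (u 1%nat * v (n+2+i)%nat - v 1%nat * u (n+2+i)%nat)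
        + cc * (u 2%nat * v (3+i)%nat - v 2%nat * u (3+i)%nat).
Proof. intros. unfold brv, isY, isZ. bdestr. replace (n + 2 + i - (n - 1))%nat with (3+i)%nat by lia. reflexivity. Qed.
Lemma brv_W u v : brv n u v (2*n+1)%nat = cc * (u 1%nat * v (2*n+1)%nat - v 1%nat * u (2*n+1)%nat)
        + cc * rsum (n-1) (fun i => u (3+i)%nat * v (n+2+i)%nat - v (3+i)%nat * u (n+2+i)%nat).
Proof. unfold brv, isY, isZ. bdestr. reflexivity. Qed.
Lemma brv_out u v k : (2*n+2 <= k)%nat -> brv n u v k = 0.
Proof. intros. unfold brv, isY, isZ. bdestr. reflexivity. Qed.

Lemma brv_enc a b : brv n (enc a) (enc b) = enc (brc (n-1) a b).
Proof.
pose proof s2_neq as Hs.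
apply functional_extensionality; intros k.
destruct (kcase k) as [->|[->|[->|[[i [Hi ->]]|[[i [Hi ->]]|[->|Hk]]]]]].
- rewrite brv_0, enc_0. simpl. field. auto.
- rewrite brv_1, enc_1. simpl. field. auto.
- rewrite brv_2, !enc_0, !enc_2. simpl. rewrite cc_s2. field. auto.
- rewrite brv_Y, !enc_0, !enc_1, !enc_Y by auto. simpl. rewrite cc_s2. field. auto.
- rewrite brv_Z, !enc_0, !enc_1, !enc_2, !enc_Y, !enc_Z by auto. simpl. rewrite cc_s2. field. auto.
- rewrite brv_W, !enc_1, !enc_W. unfold brc. cbn [rh rw].
  rewrite (rsum_ext (n-1) _ (fun i => ry a i * rz b i - ry b i * rz a i)) by (intros; rewrite !enc_Y, !enc_Z by auto; reflexivity).
  rewrite rsum_minus. unfold dot. rewrite cc_s2. field. auto.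
- rewrite brv_out, enc_out by auto. reflexivity.
Qed.

Lemma sbr_enc a b : sbr n (enc a) (enc b) = enc (brc (n-1) a b).
Proof. rewrite (sbr_eq n hn), brv_enc. reflexivity. Qed.

End F.

Section K.
Variable m : nat.
Lemma dot_sub_l f g h : dot m (fun i => f i - g i) h = dot m f h - dot m g h.
Proof. unfold dot. rewrite <- rsum_minus. apply rsum_ext; intros; ring. Qed.
Lemma dot_sub_r f g h : dot m h (fun i => f i - g i) = dot m h f - dot m h g.
Proof. unfold dot. rewrite <- rsum_minus. apply rsum_ext; intros; ring. Qed.
Lemma dot_scal_l' t f h : dot m (fun i => t * f i) h = t * dot m f h.
Proof. apply dot_scal_l. Qed.
Ltac dnorm2 := repeat (rewrite ?dot_add_l, ?dot_add_r, ?dot_sub_l, ?dot_sub_r, ?dot_scal_l, ?dot_scal_r, ?dot_zero_l, ?dot_zero_r).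

Lemma koszul a b d : (1/2) * (ipr m (brc m a b) d - ipr m (brc m b d) a + ipr m (brc m d a) b) = ipr m (nab m a b) d.
Proof.
unfold ipr, brc, nab. cbn [rh rx ry rz rw]. dnorm2.
rewrite ?(dot_comm m (ry b) (ry a)), ?(dot_comm m (ry d) (ry a)), ?(dot_comm m (ry d) (ry b)),
  ?(dot_comm m (rz b) (rz a)), ?(dot_comm m (rz d) (rz a)), ?(dot_comm m (rz d) (rz b)).
rewrite ?(dot_comm m (rz a) (ry a)), ?(dot_comm m (rz a) (ry b)), ?(dot_comm m (rz a) (ry d)),
  ?(dot_comm m (rz b) (ry a)), ?(dot_comm m (rz b) (ry b)), ?(dot_comm m (rz b) (ry d)),
  ?(dot_comm m (rz d) (ry a)), ?(dot_comm m (rz d) (ry b)), ?(dot_comm m (rz d) (ry d)).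
field.
Qed.
End K.

Lemma rsum_S k g : rsum (S k) g = rsum k g + g k.
Proof. reflexivity. Qed.
Lemma rsum_3 g : rsum 3 g = g 0%nat + g 1%nat + g 2%nat.
Proof. simpl. ring. Qed.

Lemma sq_half x y : x / s2 * (y / s2) = x * y / 2.
Proof. rewrite <- s2_sq. field. exact s2_neq. Qed.

Section G.
Variable n : nat.
Hypothesis hn : (2 <= n)%nat.

Lemma ip_enc a b : ip (sdim n) (enc n a) (enc n b) = ipr (n-1) a b.
Proof.
unfold ip, sdim. replace (2*n+2)%nat with (S (3 + (n-1) + (n-1))) by lia.
rewrite rsum_S, rsum_split, rsum_split, rsum_3.
replace (3 + (n-1) + (n-1))%nat with (2*n+1)%nat by lia.
rewrite enc_0, enc_1, enc_2, enc_0, enc_1, enc_2, enc_W, enc_W.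
cbv beta.
rewrite (rsum_ext (n-1) (fun i => enc n a (3+i)%nat * enc n b (3+i)%nat) (fun i => ry a i * ry b i))
  by (intros; rewrite !enc_Y by auto; reflexivity).
rewrite (rsum_ext (n-1) (fun i => enc n a (3 + (n-1) + i)%nat * enc n b (3 + (n-1) + i)%nat) (fun i => rz a i * rz b i))
  by (intros; replace (3 + (n-1) + i)%nat with (n+2+i)%nat by lia; rewrite !enc_Z by auto; reflexivity).
unfold ipr, dot. rewrite Rmult_opp_opp, !sq_half. field. all: auto.
Qed.

Lemma enc_dec u : (forall i, (sdim n <= i)%nat -> u i = 0) -> u 0%nat + u 1%nat = 0 -> enc n (dec n u) = u.
Proof.
intros Hs H01. unfold sdim in Hs. pose proof s2_neq.
apply functional_extensionality; intros k.
destruct (kcase n hn k) as [->|[->|[->|[[i [Hi ->]]|[[i [Hi ->]]|[->|Hk]]]]]].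
- rewrite enc_0. unfold dec; cbn [rh]. replace (u 1%nat) with (- u 0%nat) by lra. field_simplify; auto. rewrite s2_pow. field.
- rewrite enc_1. unfold dec; cbn [rh]. replace (u 0%nat) with (- u 1%nat) by lra. field_simplify; auto. rewrite s2_pow. field.
- rewrite enc_2. reflexivity.
- rewrite enc_Y by auto. unfold dec; cbn [ry]. destruct (Nat.ltb_spec i (n-1)); [reflexivity|lia].
- rewrite enc_Z by auto. unfold dec; cbn [rz]. destruct (Nat.ltb_spec i (n-1)); [reflexivity|lia].
- rewrite enc_W by auto. reflexivity.
- rewrite enc_out by auto. rewrite Hs by lia. reflexivity.
Qed.

Lemma dec_clean u : clean (n-1) (dec n u).
Proof. intros i Hi. unfold dec; cbn [ry rz]. destruct (Nat.ltb_spec i (n-1)); [lia|]. split; reflexivity. Qed.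

Lemma enc_radd p q : enc n (radd p q) = vadd (enc n p) (enc n q).
Proof.
apply functional_extensionality; intros k. unfold enc, vadd, radd. cbn [rh rx ry rz rw].
pose proof s2_neq.
repeat match goal with |- context [if ?b then _ else _] => destruct b end; try field; auto; ring.
Qed.
Lemma enc_rscal t p : enc n (rscal t p) = vscal t (enc n p).
Proof.
apply functional_extensionality; intros k. unfold enc, vscal, rscal. cbn [rh rx ry rz rw].
pose proof s2_neq.
repeat match goal with |- context [if ?b then _ else _] => destruct b end; try field; auto; ring.
Qed.

Lemma enc_supp a i : (sdim n <= i)%nat -> enc n a i = 0.
Proof. unfold sdim; intros; apply enc_out; auto. Qed.

Lemma ip_N u : ip (sdim n) u Nvec = - (1 / s2) * (u 0%nat + u 1%nat).
Proof.
unfold ip, sdim. replace (2*n+2)%nat with (2 + 2*n)%nat by lia. rewrite rsum_split.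
rewrite (rsum_zero' (2*n)) by (intros; unfold Nvec; simpl; ring).
simpl. unfold Nvec. simpl. unfold s2. ring.
Qed.

Lemma ip_enc_N a : ip (sdim n) (enc n a) Nvec = 0.
Proof. rewrite ip_N, enc_0, enc_1. ring. Qed.

Lemma ip_comm k x y : ip k x y = ip k y x.
Proof. unfold ip. apply rsum_ext; intros; ring. Qed.

Lemma ip_NN : ip (sdim n) Nvec Nvec = 1.
Proof. rewrite ip_N. unfold Nvec; simpl. pose proof s2_neq. fold s2. field_simplify; auto. rewrite s2_pow. field. Qed.

Variable f : nat -> vec.
Hypothesis Hf : ONB_sN n f.

Lemma comp i j : (i < sdim n)%nat -> (j < sdim n)%nat ->
  rsum (2*n+1) (fun l => f l i * f l j) = (if Nat.eqb i j then 1 else 0) - Nvec i * Nvec j.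
Proof.
intros Hi Hj. destruct Hf as [H1 [H2 H3]].
set (F := fun a => if Nat.ltb a (2*n+1) then f a else Nvec).
assert (Hrows : forall a b, (a < sdim n)%nat -> (b < sdim n)%nat ->
   rsum (sdim n) (fun i => Rmult (F a i) (F b i)) = if Nat.eqb a b then R1 else R0).
{ intros a b Ha Hb. unfold F. unfold sdim in Ha, Hb.
  destruct (Nat.ltb_spec a (2*n+1)), (Nat.ltb_spec b (2*n+1)).
  - change (ip (sdim n) (f a) (f b) = if Nat.eqb a b then R1 else R0). apply H2; auto.
  - change (ip (sdim n) (f a) Nvec = if Nat.eqb a b then R1 else R0). rewrite H3 by auto. destruct (Nat.eqb_spec a b); [lia|reflexivity].
  - change (ip (sdim n) Nvec (f b) = if Nat.eqb a b then R1 else R0). rewrite ip_comm, H3 by auto.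
    destruct (Nat.eqb_spec a b); [lia|reflexivity].
  - change (ip (sdim n) Nvec Nvec = if Nat.eqb a b then R1 else R0). rewrite ip_NN.
    destruct (Nat.eqb_spec a b); [reflexivity|lia]. }
pose proof (Compl.cols_orth (sdim n) F Hrows i j Hi Hj) as E.
unfold sdim in E. replace (2*n+2)%nat with (S (2*n+1)) in E by lia. rewrite rsum_S in E.
unfold F at 3 4 in E. destruct (Nat.ltb_spec (2*n+1) (2*n+1)); [lia|].
rewrite (rsum_ext _ _ (fun l => f l i * f l j)) in E.
2:{ intros l Hl. unfold F. destruct (Nat.ltb_spec l (2*n+1)); [reflexivity|lia]. }
change R1 with 1 in E. change R0 with 0 in E.
destruct (Nat.eqb i j); lra.
Qed.


Lemma Nvec_out i : (2 <= i)%nat -> Nvec i = 0.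
Proof. intros. unfold Nvec. destruct (Nat.eqb_spec i 0); [lia|]. destruct (Nat.eqb_spec i 1); [lia|]. reflexivity. Qed.

Lemma proj w i : (forall j, (sdim n <= j)%nat -> w j = 0) ->
  rsum (2*n+1) (fun l => ip (sdim n) w (f l) * f l i) = w i - ip (sdim n) w Nvec * Nvec i.
Proof.
intros Hw. destruct Hf as [H1 [H2 H3]].
destruct (lt_dec i (sdim n)).
- unfold ip.
  rewrite (rsum_ext (2*n+1) _ (fun l => rsum (sdim n) (fun j => w j * (f l j * f l i))))
    by (intros; rewrite <- rsum_scal_r; apply rsum_ext; intros; ring).
  rewrite rsum_swap.
  rewrite (rsum_ext (sdim n) _ (fun j => w j * unitv i j - (w j * Nvec j) * Nvec i)).
  2:{ intros j Hj. rewrite rsum_scal. rewrite comp by auto. unfold unitv. ring. }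
  rewrite rsum_minus, rsum_delta_r, rsum_scal_r. destruct (Nat.ltb_spec i (sdim n)); [reflexivity|lia].
- rewrite rsum_zero'. rewrite Hw by lia. rewrite Nvec_out by (unfold sdim in *; lia). ring.
  intros l Hl. rewrite H1 by lia. ring.
Qed.

Lemma proj_enc a i : rsum (2*n+1) (fun l => ip (sdim n) (enc n a) (f l) * f l i) = enc n a i.
Proof. rewrite proj, ip_enc_N. ring. intros; apply enc_supp; auto. Qed.

Lemma proj_enc_vec a : vsum (2*n+1) (fun l => vscal (ip (sdim n) (enc n a) (f l)) (f l)) = enc n a.
Proof. apply functional_extensionality; intros i. unfold vsum, vscal. apply proj_enc. Qed.

Lemma f_enc l : (l < 2*n+1)%nat -> f l = enc n (dec n (f l)).
Proof.
intros Hl. destruct Hf as [H1 [H2 H3]]. symmetry. apply enc_dec.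
- intros; apply H1; auto.
- pose proof (H3 l Hl) as E. rewrite ip_N in E. pose proof s2_pos.
  assert (0 < 1/s2) by (apply Rdiv_lt_0_compat; lra). nra.
Qed.

Lemma comp_rec p q : rsum (2*n+1) (fun l => ipr (n-1) p (dec n (f l)) * ipr (n-1) (dec n (f l)) q) = ipr (n-1) p q.
Proof.
rewrite (rsum_ext _ _ (fun l => ip (sdim n) (enc n p) (f l) * rsum (sdim n) (fun j => f l j * enc n q j))).
2:{ intros l Hl. rewrite <- !ip_enc, <- f_enc by auto. reflexivity. }
rewrite (rsum_ext _ _ (fun l => rsum (sdim n) (fun j => ip (sdim n) (enc n p) (f l) * f l j * enc n q j)))
  by (intros; rewrite <- rsum_scal; apply rsum_ext; intros; ring).
rewrite rsum_swap. rewrite <- ip_enc. unfold ip at 2. apply rsum_ext; intros j Hj.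
rewrite rsum_scal_r. rewrite proj_enc. reflexivity.
Qed.

Lemma lc_enc a b : lc (sbr n) (ip (sdim n)) f (2*n+1) (enc n a) (enc n b) = enc n (nab (n-1) a b).
Proof.
unfold lc. rewrite <- (proj_enc_vec (nab (n-1) a b)). apply functional_extensionality; intros i. unfold vsum, vscal.
apply rsum_ext; intros l Hl. f_equal.
rewrite (f_enc l Hl). rewrite !sbr_enc, !ip_enc by auto. apply koszul.
Qed.

Lemma curv_enc a b c : curv (sbr n) (ip (sdim n)) f (2*n+1) (enc n a) (enc n b) (enc n c) = enc n (curvr (n-1) a b c).
Proof.
unfold curv. rewrite !lc_enc. rewrite sbr_enc by auto. rewrite !lc_enc.
unfold curvr. rewrite !enc_radd, !enc_rscal. reflexivity.
Qed.

Lemma ric_enc a b : ric (sbr n) (ip (sdim n)) f (2*n+1) (enc n a) (enc n b) =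
  - (4 * INR (n-1) + 8) * (rh a * rh b + dot (n-1) (ry a) (ry b)).
Proof.
unfold ric.
rewrite (rsum_ext _ _ (fun l => ipr (n-1) (curvr (n-1) (dec n (f l)) a b) (dec n (f l)))).
2:{ intros l Hl. rewrite (f_enc l Hl) at 1 2. rewrite curv_enc, ip_enc by auto. reflexivity. }
replace (2*n+1)%nat with (2*(n-1)+3)%nat by lia.
rewrite trace_rec.
- apply ric_rec.
- intros; apply dec_clean.
- intros p q. replace (2*(n-1)+3)%nat with (2*n+1)%nat by lia. apply comp_rec.
Qed.

End G.


Section H.
Variable n : nat.
Hypothesis hn : (2 <= n)%nat.

Definition kap := 4 * INR (n-1) + 8.
Lemma kap_pos : 0 < kap.
Proof. unfold kap. pose proof (pos_INR (n-1)). lra. Qed.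

Definition Dm (x : vec) : vec := fun i =>
  if orb (orb (Nat.eqb i 2) (isZ n i)) (Nat.eqb i (2*n+1)) then kap * x i else 0.

Lemma Dm_0 x : Dm x 0%nat = 0. Proof. unfold Dm, isZ. bdestr. reflexivity. Qed.
Lemma Dm_1 x : Dm x 1%nat = 0. Proof. unfold Dm, isZ. bdestr. reflexivity. Qed.
Lemma Dm_2 x : Dm x 2%nat = kap * x 2%nat. Proof. unfold Dm, isZ. bdestr. reflexivity. Qed.
Lemma Dm_Y x i : (i < n-1)%nat -> Dm x (3+i)%nat = 0. Proof. intros. unfold Dm, isZ. bdestr. reflexivity. Qed.
Lemma Dm_Z x i : (i < n-1)%nat -> Dm x (n+2+i)%nat = kap * x (n+2+i)%nat. Proof. intros. unfold Dm, isZ. bdestr. reflexivity. Qed.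
Lemma Dm_W x : Dm x (2*n+1)%nat = kap * x (2*n+1)%nat. Proof. unfold Dm, isZ. bdestr. reflexivity. Qed.
Lemma Dm_out x k : (2*n+2 <= k)%nat -> Dm x k = 0. Proof. intros. unfold Dm, isZ. bdestr. reflexivity. Qed.

Lemma Dm_brv x y k : Dm (brv n x y) k = brv n (Dm x) y k + brv n x (Dm y) k.
Proof.
destruct (kcase n hn k) as [->|[->|[->|[[i [Hi ->]]|[[i [Hi ->]]|[->|Hk]]]]]].
- rewrite Dm_0, !brv_0 by auto. ring.
- rewrite Dm_1, !brv_1 by auto. ring.
- rewrite Dm_2, !brv_2, !Dm_0, !Dm_2 by auto. ring.
- rewrite Dm_Y, !brv_Y, !Dm_0, !Dm_1, !Dm_Y by auto. ring.
- rewrite Dm_Z, !brv_Z, !Dm_0, !Dm_1, !Dm_2, !Dm_Y, !Dm_Z by auto. ring.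
- rewrite Dm_W, !brv_W, !Dm_1, !Dm_W by auto.
  rewrite (rsum_ext _ (fun i => Dm x (3 + i)%nat * y (n + 2 + i)%nat - y (3 + i)%nat * Dm x (n + 2 + i)%nat)
     (fun i => -kap * (y (3 + i)%nat * x (n + 2 + i)%nat))) by (intros; rewrite Dm_Y, Dm_Z by auto; ring).
  rewrite (rsum_ext _ (fun i => x (3 + i)%nat * Dm y (n + 2 + i)%nat - Dm y (3 + i)%nat * x (n + 2 + i)%nat)
     (fun i => kap * (x (3 + i)%nat * y (n + 2 + i)%nat))) by (intros; rewrite Dm_Y, Dm_Z by auto; ring).
  rewrite !rsum_scal, rsum_minus. ring.
- rewrite Dm_out, !brv_out by auto. ring.
Qed.

Definition DR (a : rv) := mkrv 0 (kap * rx a) (fun _ => 0) (fun j => kap * rz a j) (kap * rw a).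
Lemma Dm_enc a : Dm (enc n a) = enc n (DR a).
Proof.
apply functional_extensionality; intros k.
destruct (kcase n hn k) as [->|[->|[->|[[i [Hi ->]]|[[i [Hi ->]]|[->|Hk]]]]]].
- rewrite Dm_0, enc_0. simpl. field. exact s2_neq.
- rewrite Dm_1, enc_1. simpl. field. exact s2_neq.
- rewrite Dm_2, !enc_2. reflexivity.
- rewrite Dm_Y, enc_Y by auto. reflexivity.
- rewrite Dm_Z, !enc_Z by auto. reflexivity.
- rewrite Dm_W, !enc_W by auto. reflexivity.
- rewrite Dm_out, enc_out by auto. reflexivity.
Qed.

Definition Ra (a : rv) := mkrv (- kap * rh a) 0 (fun j => - kap * ry a j) (fun _ => 0) 0.
Lemma Ra_eq a : enc n (Ra a) = vadd (vscal (- kap) (enc n a)) (Dm (enc n a)).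
Proof.
rewrite Dm_enc. apply functional_extensionality; intros k. unfold vadd, vscal.
destruct (kcase n hn k) as [->|[->|[->|[[i [Hi ->]]|[[i [Hi ->]]|[->|Hk]]]]]].
- rewrite !enc_0. simpl. field. exact s2_neq.
- rewrite !enc_1. simpl. field. exact s2_neq.
- rewrite !enc_2. simpl. ring.
- rewrite !enc_Y by auto. simpl. ring.
- rewrite !enc_Z by auto. simpl. ring.
- rewrite !enc_W by auto. simpl. ring.
- rewrite !enc_out by auto. ring.
Qed.

Variable f : nat -> vec.
Hypothesis Hf : ONB_sN n f.

Lemma f01 l : (l < 2*n+1)%nat -> f l 0%nat + f l 1%nat = 0.
Proof.
intros Hl. destruct Hf as [H1 [H2 H3]].
pose proof (H3 l Hl) as E. rewrite ip_N in E by auto. pose proof s2_pos.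
assert (0 < 1/s2) by (apply Rdiv_lt_0_compat; lra). nra.
Qed.

Lemma inV_enc x : inV f (2*n+1) x -> x = enc n (dec n x).
Proof.
intros [a Ha].
assert (Hs : forall i, (sdim n <= i)%nat -> x i = 0).
{ intros i Hi. rewrite Ha. unfold vsum, vscal. apply rsum_zero'. intros l Hl.
  destruct Hf as [H1 _]. rewrite H1 by auto. ring. }
assert (H01 : x 0%nat + x 1%nat = 0).
{ rewrite !Ha. unfold vsum, vscal. rewrite <- rsum_plus. apply rsum_zero'. intros l Hl.
  replace (a l * f l 0%nat + a l * f l 1%nat) with (a l * (f l 0%nat + f l 1%nat)) by ring.
  rewrite f01 by auto. ring. }
symmetry. apply enc_dec; auto.
Qed.

Lemma enc_inV a : inV f (2*n+1) (enc n a).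
Proof.
exists (fun l => ip (sdim n) (enc n a) (f l)). intros i. unfold vsum, vscal.
symmetry. apply proj_enc; auto.
Qed.

Lemma ric_op_enc a : ric_op (sbr n) (ip (sdim n)) f (2*n+1) (enc n a) = enc n (Ra a).
Proof.
unfold ric_op. rewrite <- (proj_enc_vec n hn f Hf (Ra a)).
apply functional_extensionality; intros i. unfold vsum, vscal. apply rsum_ext; intros l Hl. f_equal.
rewrite (f_enc n hn f Hf l Hl) at 1 2. rewrite ric_enc, ip_enc by auto.
unfold ipr, Ra. cbn [rh rx ry rz rw]. rewrite dot_scal_l, dot_zero_l. unfold kap. ring.
Qed.

End H.

Definition Zp (Cd : nat -> Prop) (x : vec) : Prop := forall i, Cd i -> x i = 0.

Lemma derived_Zp n (P : vec -> Prop) Cd : (forall x y, P x -> P y -> Zp Cd (sbr n x y)) ->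
  forall x, derived (sbr n) P x -> Zp Cd x.
Proof.
intros Hb x Hd. induction Hd; intros i Hi.
- apply Hb; auto.
- reflexivity.
- unfold vadd. rewrite IHHd1, IHHd2 by auto. ring.
- unfold vscal. rewrite IHHd by auto. ring.
- rewrite <- H. apply IHHd; auto.
Qed.

Section S.
Variable n : nat.
Hypothesis hn : (2 <= n)%nat.
Definition C1 i := i = 0%nat \/ i = 1%nat \/ (2*n+2 <= i)%nat.
Definition C2 i := (i < n+2)%nat \/ (2*n+1 < i)%nat.

Lemma br_C1 x y : Zp C1 (sbr n x y).
Proof.
intros i Hi. rewrite (sbr_brv n hn). destruct Hi as [->|[->|Hi]].
apply brv_0; auto. apply brv_1; auto. apply brv_out; auto.
Qed.

Lemma br_C2 x y : Zp C1 x -> Zp C1 y -> Zp C2 (sbr n x y).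
Proof.
intros Hx Hy i Hi. rewrite (sbr_brv n hn). unfold C2 in Hi.
assert (x0 : x 0%nat = 0) by (apply Hx; left; auto).
assert (y0 : y 0%nat = 0) by (apply Hy; left; auto).
assert (x1 : x 1%nat = 0) by (apply Hx; right; left; auto).
assert (y1 : y 1%nat = 0) by (apply Hy; right; left; auto).
destruct (kcase n hn i) as [->|[->|[->|[[j [Hj ->]]|[[j [Hj ->]]|[->|Hk]]]]]].
- apply brv_0; auto.
- apply brv_1; auto.
- rewrite brv_2, x0, y0. ring.
- rewrite brv_Y, x0, y0, x1, y1 by auto. ring.
- lia.
- lia.
- apply brv_out; auto.
Qed.

Lemma br_C3 x y : Zp C2 x -> Zp C2 y -> Zp (fun _ => True) (sbr n x y).
Proof.
intros Hx Hy i _. rewrite (sbr_brv n hn).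
assert (Hx' : forall j, (j < n+2)%nat -> x j = 0) by (intros; apply Hx; left; auto).
assert (Hy' : forall j, (j < n+2)%nat -> y j = 0) by (intros; apply Hy; left; auto).
destruct (kcase n hn i) as [->|[->|[->|[[j [Hj ->]]|[[j [Hj ->]]|[->|Hk]]]]]].
- apply brv_0; auto.
- apply brv_1; auto.
- rewrite brv_2, !Hx', !Hy' by lia. ring.
- rewrite brv_Y by auto. rewrite !Hx', !Hy' by lia. ring.
- rewrite brv_Z by auto. rewrite (Hx' 0%nat), (Hy' 0%nat), (Hx' 1%nat), (Hy' 1%nat), (Hx' 2%nat), (Hy' 2%nat) by lia. ring.
- rewrite brv_W by auto. rewrite (Hx' 1%nat), (Hy' 1%nat) by lia.
  rewrite rsum_zero'. ring. intros j Hj. rewrite (Hx' (3+j)%nat), (Hy' (3+j)%nat) by lia. ring.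
- apply brv_out; auto.
Qed.

Lemma solv f : solvable (sbr n) f (2*n+1).
Proof.
exists 3%nat. intros x Hx. simpl in Hx.
assert (L1 : forall z, derser (sbr n) f (2*n+1) 1 z -> Zp C1 z).
{ intros z Hz. simpl in Hz. eapply derived_Zp; [|exact Hz]. intros; apply br_C1. }
assert (L2 : forall z, derser (sbr n) f (2*n+1) 2 z -> Zp C2 z).
{ intros z Hz. simpl in Hz. eapply derived_Zp; [|exact Hz]. intros a b Ha Hb. apply br_C2; apply L1; auto. }
assert (L3 : Zp (fun _ => True) x).
{ eapply derived_Zp; [|exact Hx]. intros a b Ha Hb. apply br_C3; apply L2; auto. }
intros i. apply L3. auto.
Qed.

End S.

Theorem proposition5p7 :
  forall (n : nat), (2 <= n)%nat ->
  forall f : nat -> vec, ONB_sN n f ->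
    exists c : R, c < 0 /\
      nontrivial_solvsoliton_with_const (sbr n) (ip (sdim n)) f (2 * n + 1) c.
Proof.
intros n hn f Hf.
exists (- kap n). split. pose proof (kap_pos n). lra.
split; [apply solv; auto|]. split.
- exists (Dm n). split.
  + split; [|split].
    * intros x Hx. rewrite (inV_enc n hn f Hf x Hx), (Dm_enc n hn). apply enc_inV; auto.
    * intros a b x y _ _ i. unfold Dm, vadd, vscal.
      destruct (orb (orb (Nat.eqb i 2) (isZ n i)) (Nat.eqb i (2*n+1))); ring.
    * intros x y _ _ i. rewrite !(sbr_eq n hn). unfold vadd. apply Dm_brv; auto.
  + intros x Hx i. rewrite (inV_enc n hn f Hf x Hx). rewrite ric_op_enc, Ra_eq by auto. reflexivity.
- intros [c' Hc'].
  assert (E1 := Hc' (enc n bX) (enc_inV n hn f Hf bX) 2%nat).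
  assert (E2 := Hc' (enc n (bY 0)) (enc_inV n hn f Hf (bY 0)) 3%nat).
  rewrite ric_op_enc in E1, E2 by auto. unfold vscal in E1, E2.
  rewrite !enc_2 in E1. replace 3%nat with (3+0)%nat in E2 by reflexivity.
  rewrite !enc_Y in E2 by lia. unfold Ra, bX, bY in E1, E2. cbn [rx ry] in E1, E2.
  rewrite unitv_same in E2. pose proof (kap_pos n). nra.
Qed.
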